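(* Let $x_1,\dots,x_N\in\mathbb R^d$, let $V\in\mathbb R^{d\times d}$ be symmetric positive definite, let $\theta,\hat\theta\in\mathbb R^d$ and $\beta\ge0$ satisfy $\|\hat\theta-\theta\|_V\le\beta$, and let $Q_1,\dots,Q_N\ge0$. Define $h_m=x_m^\top\hat\theta+\beta\|x_m\|_{V^{-1}}$ and $\tilde\mu(n\mid S)=\frac{\exp(h_n)}{1+\sum_{m\in S}\exp(h_m)}$ for $n\in S\subseteq[N]$. Then for every nonempty $S\subseteq[N]$, $$\sum_{n\in S}\big(\tilde\mu(n\mid S)-\mu(n\mid S,\theta)\big)Q_n\le2\beta\max_{n\in S}\big(\|x_n\|_{V^{-1}}\,Q_n\big).$$
   Context: For $S\subseteq[N]$, $\theta\in\mathbb R^d$ and $n\in S$, $\mu(n\mid S,\theta)=\frac{\exp(x_n^\top\theta)}{1+\sum_{m\in S}\exp(x_m^\top\theta)}$. For a positive definite matrix $A$, $\|v\|_A=\sqrt{v^\top Av}$. *)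

(* Defs.v *)
From HB Require Import structures.
From mathcomp Require Import all_boot all_order all_algebra.
From mathcomp Require Import reals.
From mathcomp Require Import sequences exp.
Set Implicit Arguments. Unset Strict Implicit. Unset Printing Implicit Defensive.
Import Order.TTheory GRing.Theory Num.Theory.
Local Open Scope ring_scope.

Section Defs.
Variables (R : realType) (d N : nat).

Definition qform (A : 'M[R]_d) (v : 'cV[R]_d) : R := ((v^T *m A *m v) 0 0).

Definition wnorm (A : 'M[R]_d) (v : 'cV[R]_d) : R := Num.sqrt (qform A v).

Definition symmetricmx (A : 'M[R]_d) : Prop := A^T = A.

Definition posdefmx (A : 'M[R]_d) : Prop :=
  symmetricmx A /\ forall v : 'cV[R]_d, v != 0 -> 0 < qform A v.

Definition dotv (x y : 'cV[R]_d) : R := ((x^T *m y) 0 0).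

Definition mnl_prob (x : 'I_N -> 'cV[R]_d) (S : {set 'I_N}) (theta : 'cV[R]_d)
  (n : 'I_N) : R :=
  expR (dotv (x n) theta) / (1 + \sum_(m in S) expR (dotv (x m) theta)).

Definition hopt (x : 'I_N -> 'cV[R]_d) (V : 'M[R]_d) (thetah : 'cV[R]_d)
  (beta : R) (m : 'I_N) : R :=
  dotv (x m) thetah + beta * wnorm (invmx V) (x m).

Definition mnl_opt (x : 'I_N -> 'cV[R]_d) (V : 'M[R]_d) (thetah : 'cV[R]_d)
  (beta : R) (S : {set 'I_N}) (n : 'I_N) : R :=
  expR (hopt x V thetah beta n) / (1 + \sum_(m in S) expR (hopt x V thetah beta m)).

End Defs.

(* Main.v *)
Require Import Defs.
From HB Require Import structures.
From mathcomp Require Import all_boot all_order all_algebra.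
From mathcomp Require Import reals.
From mathcomp Require Import sequences exp.
From mathcomp Require Import ring lra.
Import Order.TTheory GRing.Theory Num.Theory.
Local Open Scope ring_scope.
Set Implicit Arguments. Unset Strict Implicit.

Section CS.
Variables (R : realType) (d : nat) (V : 'M[R]_d).
Definition bf (a c : 'cV[R]_d) : R := (a^T *m V *m c) 0 0.

Lemma bfDl a1 a2 c : bf (a1 + a2) c = bf a1 c + bf a2 c.
Proof. by rewrite /bf linearD /= !mulmxDl mxE. Qed.
Lemma bfDr a c1 c2 : bf a (c1 + c2) = bf a c1 + bf a c2.
Proof. by rewrite /bf mulmxDr mxE. Qed.
Lemma bfZl t a c : bf (t *: a) c = t * bf a c.
Proof. by rewrite /bf linearZ /= -!scalemxAl mxE. Qed.
Lemma bfZr t a c : bf a (t *: c) = t * bf a c.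
Proof. by rewrite /bf -scalemxAr mxE. Qed.
Lemma bfNl a c : bf (- a) c = - bf a c.
Proof. by rewrite -scaleN1r bfZl mulN1r. Qed.
Lemma bfNr a c : bf a (- c) = - bf a c.
Proof. by rewrite -scaleN1r bfZr mulN1r. Qed.
Lemma bf0r a : bf a 0 = 0.
Proof. by rewrite /bf mulmx0 mxE. Qed.

Hypothesis HV : posdefmx V.

Lemma bf_sym a c : bf a c = bf c a.
Proof.
rewrite /bf -[in LHS](trmxK (a^T *m V *m c)) [in LHS]mxE.
by rewrite !trmx_mul trmxK (proj1 HV) mulmxA.
Qed.

Lemma bf_ge0 a : 0 <= bf a a.
Proof.
have [->|a0] := eqVneq a 0; first by rewrite bf0r.
exact/ltW/(proj2 HV).
Qed.

Lemma bf_CS a c : bf a c ^+ 2 <= bf a a * bf c c.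
Proof.
have [->|c0] := eqVneq c 0; first by rewrite !bf0r expr0n /= mulr0.
have qc : 0 < bf c c by exact: (proj2 HV).
have := bf_ge0 (bf c c *: a - bf a c *: c).
rewrite bfDl !bfDr !bfNl !bfZl !bfZr (bf_sym c a).
set qa := bf a a; set qc' := bf c c; set b := bf a c => H.
have : 0 <= qc' * (qa * qc' - b ^+ 2).
  move: H. set L := (X in 0 <= X -> _). have -> : L = qc' * (qa * qc' - b ^+ 2). by rewrite /L !bfNr !bfZr -/b -/qc'; ring. done.
by rewrite pmulr_rge0 // subr_ge0 mulrC.
Qed.
End CS.

Lemma posdef_unit (R : realType) (d : nat) (V : 'M[R]_d) :
  posdefmx V -> V \in unitmx.
Proof.
move=> HV; rewrite unitmxE unitfE; apply/negP => /det0P [v v0 hv].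
have := proj2 HV v^T; rewrite trmx_eq0 => /(_ v0).
by rewrite /qform trmxK hv mul0mx mxE ltxx.
Qed.

Lemma dot_bound (R : realType) (d : nat) (V : 'M[R]_d) (x v : 'cV[R]_d) :
  posdefmx V -> `|dotv x v| <= wnorm (invmx V) x * wnorm V v.
Proof.
move=> HV; have U := posdef_unit HV.
set y := invmx V *m x.
have xe : x = V *m y by rewrite /y mulmxA mulmxV // mul1mx.
have -> : dotv x v = bf V y v.
  by rewrite /dotv /bf {1}xe trmx_mul (proj1 HV).
have -> : wnorm (invmx V) x = Num.sqrt (bf V y y).
  rewrite /wnorm /qform /bf /y trmx_mul trmx_inv (proj1 HV).
  by rewrite -!mulmxA (mulmxA V) mulmxV // mul1mx.
have -> : wnorm V v = Num.sqrt (bf V v v) by [].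
rewrite -sqrtrM ?bf_ge0 // -sqrtr_sqr ler_sqrt ?bf_CS //.
by rewrite mulr_ge0 ?bf_ge0.
Qed.

Theorem mainTheorem7 (R : realType) (d N : nat)
  (x : 'I_N -> 'cV[R]_d) (V : 'M[R]_d) (theta thetah : 'cV[R]_d) (beta : R)
  (Q : 'I_N -> R) (S : {set 'I_N}) :
  posdefmx V ->
  0 <= beta ->
  wnorm V (thetah - theta) <= beta ->
  (forall n, 0 <= Q n) ->
  S != set0 ->
  \sum_(n in S) (mnl_opt x V thetah beta S n - mnl_prob x S theta n) * Q n
    <= 2 * beta * \big[Num.max/0]_(n in S) (wnorm (invmx V) (x n) * Q n).
Proof.
move=> HV hb hnorm hQ /set0Pn [n0 n0S].
set M := \big[Num.max/0]_(n in S) (wnorm (invmx V) (x n) * Q n).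
have hM n : n \in S -> wnorm (invmx V) (x n) * Q n <= M.
  by move=> nS; apply: le_bigmax_cond.
have w0 n : 0 <= wnorm (invmx V) (x n) by apply: sqrtr_ge0.
have M0 : 0 <= M by apply: le_trans (hM _ n0S); rewrite mulr_ge0.
set w := fun n => wnorm (invmx V) (x n).
set u := fun n => dotv (x n) theta.
set h := fun n => hopt x V thetah beta n.
have hD n : h n - u n = dotv (x n) (thetah - theta) + beta * w n.
  rewrite /h /u /hopt /dotv mulmxBr !mxE /w; ring.
have hdot n : `|dotv (x n) (thetah - theta)| <= beta * w n.
  apply: le_trans (dot_bound (x n) (thetah - theta) HV) _.
  by rewrite mulrC; apply: ler_wpM2r.
have Dlo n : 0 <= h n - u n.
  rewrite hD; move: (hdot n); rewrite ler_norml => /andP[h1 _]; lra.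
have Dhi n : h n - u n <= 2 * beta * w n.
  rewrite hD; move: (hdot n); rewrite ler_norml => /andP[_ h1]; lra.
set A := \sum_(m in S) expR (u m).
set B := \sum_(m in S) expR (h m).
have A0 : 0 <= A by apply: sumr_ge0 => m _; apply/ltW/expR_gt0.
have AB : A <= B.
  by apply: ler_sum => m _; rewrite ler_expR -subr_ge0.
have B1 : 0 < 1 + B by lra.
have A1 : 0 < 1 + A by lra.
have eq_opt n : mnl_opt x V thetah beta S n = expR (h n) / (1 + B) by [].
have eq_prob n : mnl_prob x S theta n = expR (u n) / (1 + A) by [].
have e0 n : 0 <= expR (h n) / (1 + B).
  by rewrite divr_ge0 ?(ltW (expR_gt0 _)) // ltW.
have key n : expR (h n) / (1 + B) * (1 - (h n - u n)) <= expR (u n) / (1 + A).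
  have s1 : expR (h n) * (1 - (h n - u n)) <= expR (u n).
    have -> : expR (u n) = expR (h n) * expR (u n - h n).
      by rewrite -expRD; congr expR; ring.
    by rewrite ler_pM2l ?expR_gt0 // -[X in X <= _](addrC) ; 
       apply: le_trans (expR_ge1Dx _); lra.
  rewrite mulrAC; apply: (@le_trans _ _ (expR (u n) / (1 + B))).
    by rewrite ler_pM2r ?invr_gt0.
  by rewrite ler_pM2l ?expR_gt0 // /= lef_pV2 ?posrE //; lra.
apply: (@le_trans _ _ (\sum_(n in S) expR (h n) / (1 + B) * (2 * beta * M))).
  apply: ler_sum => n nS; rewrite eq_opt eq_prob.
  set e := expR (h n) / (1 + B); set p := expR (u n) / (1 + A).
  have k := key n; rewrite -/e -/p in k.
  have s1 : e - p <= e * (h n - u n) by lra.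
  apply: (@le_trans _ _ (e * (h n - u n) * Q n)); first by apply: ler_wpM2r.
  rewrite -mulrA; apply: ler_wpM2l; first exact: e0.
  apply: (@le_trans _ _ (2 * beta * w n * Q n)); first exact: (ler_wpM2r (hQ n) (Dhi n)).
  rewrite -mulrA; apply: ler_wpM2l; [by rewrite mulr_ge0 | exact: hM].
rewrite -mulr_suml; apply: ler_piMl; first by rewrite !mulr_ge0.
rewrite -mulr_suml ler_pdivrMr // mul1r -/B; lra.
Qed.
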